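(* Let $d=4k+1$ with $k\ge3$. Consider the families (all indices read modulo $d$) $C^0=\{L^0_{1+i,2k+i}\}_{i=0}^{k}\cup\{L^0_{k+i,k+i}\}_{i=2}^{k-1}\cup\{L^0_{2k+i,1+i}\}_{i=0}^{k}\cup\{L^0_{3k+i,3k+i}\}_{i=1}^{k+1}$, $C^1=\{L^1_{2k+1,2k+i}\}_{i=1}^{k-1}\cup\{L^1_{3k+1,2k}\}\cup\{L^1_{1,k+i}\}_{i=0}^{k-1}\cup\{L^1_{2k+1,i}\}_{i=0}^{k-1}\cup\{L^1_{3k+2,4k}\}\cup\{L^1_{2,3k+i}\}_{i=0}^{k-1}$, $C^2=\{L^2_{1,i}\}_{i=0}^{k-1}\cup\{L^2_{2k+2,3k+i}\}_{i=0}^{k}\cup\{L^2_{2,2k+i}\}_{i=0}^{k-1}\cup\{L^2_{2k+2,k+i}\}_{i=0}^{k-1}$. Then $C^0\cup C^1\cup C^2$ consists of $3d$ pairwise disjoint lines on ${\rm F}_d$.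
   Context: ${\rm F}_d\subset\mathbb{P}^3(\mathbb{C})$ is the surface $x^d-y^d-z^d+w^d=0$ ($d$ odd). Fix a primitive $d$-th root of unity $\eta$ and put $v=-1$. For integers $k,i$ (taken modulo $d$) define the lines $L^0_{k,i}:\{y=\eta^i x,\ w=\eta^k z\}$, $L^1_{k,i}:\{x=\eta^{k+i}z,\ y=\eta^i w\}$, $L^2_{k,i}:\{x=v\eta^i w,\ y=v\eta^{k+i}z\}$, all lying on ${\rm F}_d$. *)

(* Defs.v *)
From mathcomp Require Import all_boot all_algebra all_field.
Set Implicit Arguments. Unset Strict Implicit. Unset Printing Implicit Defensive.
Import GRing.Theory Num.Theory.
Local Open Scope ring_scope.

(* Lines on the surface F_d : x^d - y^d - z^d + w^d = 0 in P^3(C), C = algC.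
   Indices are natural numbers; since eta^d = 1, eta ^+ n depends only on n mod d. *)
Inductive fline := L0 of nat & nat | L1 of nat & nat | L2 of nat & nat.

Definition vsign : algC := -1.

Definition on_line (eta : algC) (l : fline) (x y z w : algC) : Prop :=
  match l with
  | L0 k i => y = eta ^+ i * x /\ w = eta ^+ k * z
  | L1 k i => x = eta ^+ (k + i) * z /\ y = eta ^+ i * w
  | L2 k i => x = vsign * eta ^+ i * w /\ y = vsign * eta ^+ (k + i) * z
  end.

Definition nonzero4 (x y z w : algC) : Prop := ~ (x = 0 /\ y = 0 /\ z = 0 /\ w = 0).

Definition line_on_Fd (d : nat) (eta : algC) (l : fline) : Prop :=
  forall x y z w : algC, on_line eta l x y z w ->
    x ^+ d - y ^+ d - z ^+ d + w ^+ d = 0.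

Definition lines_disjoint (eta : algC) (l1 l2 : fline) : Prop :=
  forall x y z w : algC, nonzero4 x y z w ->
    on_line eta l1 x y z w -> on_line eta l2 x y z w -> False.

Definition C0 (k : nat) : seq fline :=
  [seq L0 (1 + i) (2 * k + i) | i <- iota 0 (k + 1)] ++
  [seq L0 (k + i) (k + i) | i <- iota 2 (k - 2)] ++
  [seq L0 (2 * k + i) (1 + i) | i <- iota 0 (k + 1)] ++
  [seq L0 (3 * k + i) (3 * k + i) | i <- iota 1 (k + 1)].

Definition C1 (k : nat) : seq fline :=
  [seq L1 (2 * k + 1) (2 * k + i) | i <- iota 1 (k - 1)] ++
  [:: L1 (3 * k + 1) (2 * k)] ++
  [seq L1 1 (k + i) | i <- iota 0 k] ++
  [seq L1 (2 * k + 1) i | i <- iota 0 k] ++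
  [:: L1 (3 * k + 2) (4 * k)] ++
  [seq L1 2 (3 * k + i) | i <- iota 0 k].

Definition C2 (k : nat) : seq fline :=
  [seq L2 1 i | i <- iota 0 k] ++
  [seq L2 (2 * k + 2) (3 * k + i) | i <- iota 0 (k + 1)] ++
  [seq L2 2 (2 * k + i) | i <- iota 0 k] ++
  [seq L2 (2 * k + 2) (k + i) | i <- iota 0 k].

(* Main.v *)
Require Import Defs.
From mathcomp Require Import all_boot all_algebra all_field.
From mathcomp Require Import zify ring.
Set Implicit Arguments. Unset Strict Implicit. Unset Printing Implicit Defensive.
Import GRing.Theory Num.Theory.

Lemma neq_mod (a b d : nat) :
  (0 < d /\ a < 4*d /\ b < 4*d /\ a <> b /\ a <> b + d /\ a <> b + 2*d /\ a <> b+3*d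
   /\ b <> a + d /\ b <> a+2*d /\ b <> a+3*d)%N -> (a %% d != b %% d)%N.
Proof.
move=> H; apply/negP => /eqP E.
have ea := div.divn_eq a d; have eb := div.divn_eq b d.
have qa : (a %/ d < 4)%N by rewrite ltn_divLR; lia.
have qb : (b %/ d < 4)%N by rewrite ltn_divLR; lia.
move: qa qb ea eb; rewrite E.
case: (a %/ d) => [|[|[|[|]]]] //; case: (b %/ d) => [|[|[|[|]]]] // _ _; lia.
Qed.

Lemma pairwise_iota (r : rel nat) m n :
  (forall i j, (m <= i)%N -> (i < j)%N -> (j < m + n)%N -> r i j) -> pairwise r (iota m n).
Proof.
elim: n m => [//|n IH] m H /=; apply/andP; split.
  apply/allP => j; rewrite mem_iota => /andP[h1 h2]; apply: H; lia.
apply: IH => i j h1 h2 h3; apply: H; lia.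
Qed.

Local Open Scope ring_scope.
Section S.
Variables (d : nat) (eta : algC).
Hypothesis prim : d.-primitive_root eta.

Lemma eta_neq a b : (a %% d != b %% d)%N -> eta ^+ a != eta ^+ b.
Proof. by rewrite (eq_prim_root_expr prim). Qed.

Lemma eta_nz : eta != 0.
Proof.
apply/negP => /eqP e; have := prim_expr_order prim; rewrite e expr0n.
by have := prim_order_gt0 prim; case: d => // n _ /=; move/eqP; rewrite eq_sym oner_eq0.
Qed.

Lemma canc (u v x : algC) : u != v -> u * x = v * x -> x = 0.
Proof.
move=> uv /eqP; rewrite -subr_eq0 -mulrBl mulf_eq0 subr_eq0 (negbTE uv) /=.
by move/eqP.
Qed.

Lemma diff_eq (c A B P Q : algC) : c != 0 -> c * (A - B) = P - Q -> P = Q -> A = B.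
Proof.
move=> c0 e pq; move: e; rewrite pq subrr => /eqP; rewrite mulf_eq0 (negbTE c0) /= subr_eq0.
by move/eqP.
Qed.

Lemma etaX i : (eta ^+ i) ^+ d = 1.
Proof. by rewrite -exprM mulnC exprM (prim_expr_order prim) expr1n. Qed.

Lemma on_Fd l : odd d -> line_on_Fd d eta l.
Proof.
move=> od x y z w; case: l => k i /= [-> ->].
- by rewrite !exprMn !etaX !mul1r; ring.
- by rewrite !exprMn !etaX !mul1r; ring.
have m1 : vsign ^+ d = -1 by rewrite /vsign -signr_odd od.
by rewrite !exprMn !etaX m1 !mulr1; ring.
Qed.

Definition good (a b : fline) : bool :=
  match a, b with
  | L0 k i, L0 k' i' => (i %% d != i' %% d) && (k %% d != k' %% d)
  | L0 k i, L1 k' i' => ((i + (k' + i')) %% d != (i' + k) %% d)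
  | L0 k i, L2 k' i' => ((i + (i' + k)) %% d != (k' + i') %% d)
  | L1 k i, L1 k' i' => ((k + i) %% d != (k' + i') %% d) && (i %% d != i' %% d)
  | L1 k i, L2 k' i' => ((i + (k + i)) %% d != (i' + (k' + i')) %% d)
  | L2 k i, L2 k' i' => (i %% d != i' %% d) && ((k + i) %% d != (k' + i') %% d)
  | _, _ => false
  end%N.

Lemma good_disj a b : good a b -> lines_disjoint eta a b.
Proof.
have ez := eta_nz.
case: a => k i; case: b => k' i' //= G x y z w nz.
- case/andP: G => /eta_neq G1 /eta_neq G2 [h1 h2] [h3 h4].
  have x0 : x = 0 by apply: (canc G1); rewrite -h1.
  have z0 : z = 0 by apply: (canc G2); rewrite -h2.
  by apply: nz; rewrite h1 h2 x0 z0 !mulr0.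
- move/eta_neq: G => G [h1 h2] [h3 h4].
  have z0 : z = 0.
    apply: (canc G); apply: (diff_eq (c:=1) (P := eta ^+ i * x) (Q := eta ^+ i' * w)).
    + exact: oner_neq0.
    + by rewrite h3 h2 !exprD; ring.
    + by rewrite -h1 -h4.
  by apply: nz; rewrite h4 h2 h3 z0 !mulr0.
- move/eta_neq: G => G [h1 h2] [h3 h4].
  rewrite /vsign in h3 h4.
  have z0 : z = 0.
    apply: (canc G); apply: (diff_eq (c:=-1) (P := eta ^+ i * x) (Q := y)).
    + by rewrite oppr_eq0 oner_neq0.
    + by rewrite h4 h3 h2 !exprD; ring.
    + by rewrite -h1.
  by apply: nz; rewrite h1 h3 h2 z0 !mulr0.
- case/andP: G => /eta_neq G1 /eta_neq G2 [h1 h2] [h3 h4].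
  have z0 : z = 0 by apply: (canc G1); rewrite -h1.
  have w0 : w = 0 by apply: (canc G2); rewrite -h2.
  by apply: nz; rewrite h1 h2 z0 w0 !mulr0.
- move/eta_neq: G => G [h1 h2] [h3 h4].
  rewrite /vsign in h3 h4.
  have z0 : z = 0.
    apply: (canc G); apply: (diff_eq (c:=1) (P := eta ^+ i * x) (Q := - (eta ^+ i' * y))).
    + exact: oner_neq0.
    + by rewrite h1 h4 !exprD; ring.
    + by rewrite h3 h2; ring.
  have w0 : w = 0.
    by apply/eqP; move: h2; rewrite h4 z0 !mulr0 => /esym/eqP; rewrite mulf_eq0 expf_eq0 (negbTE ez) andbF.
  by apply: nz; rewrite h1 h2 z0 w0 !mulr0.
- case/andP: G => /eta_neq G1 /eta_neq G2 [h1 h2] [h3 h4].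
  have w0 : w = 0.
    apply: (canc G1); apply: (mulfI (_ : vsign != 0)); first by rewrite /vsign oppr_eq0 oner_eq0.
    by rewrite !mulrA -h1.
  have z0 : z = 0.
    apply: (canc G2); apply: (mulfI (_ : vsign != 0)); first by rewrite /vsign oppr_eq0 oner_eq0.
    by rewrite !mulrA -h2.
  by apply: nz; rewrite h1 h2 z0 w0 !mulr0.
Qed.
End S.

Ltac fin :=
  lazymatch goal with
  | |- is_true (allrel _ _ _) => apply/allrelP => ? ?; rewrite !mem_iota => /andP[? ?] /andP[? ?]
  | |- is_true (all _ _) => apply/allP => ?; rewrite mem_iota => /andP[? ?]
  | |- is_true (pairwise _ _) => apply: pairwise_iota => ? ? ? ? ?
  | _ => idtac end;
  rewrite /=; repeat (apply/andP; split); apply: neq_mod; lia.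

Lemma pw (k : nat) (hk : (3 <= k)%N) : pairwise (good (4*k+1)%N) (C0 k ++ C1 k ++ C2 k).
Proof.
rewrite /C0 /C1 /C2 -!catA !pairwise_cat ?allrel_catl ?allrel_catr ?allrel_mapl ?allrel_mapr ?pairwise_map
  ?allrel1l ?allrel1r ?all_map /=.
repeat (apply/andP; split).
all: try done; fin.
Qed.

Local Open Scope ring_scope.

Theorem proposition4p4 (k : nat) (hk : (3 <= k)%N) (eta : algC)
  (heta : (4 * k + 1)%N.-primitive_root eta) :
  let C := C0 k ++ C1 k ++ C2 k in
  size C = (3 * (4 * k + 1))%N /\
  (forall i : nat, (i < size C)%N -> line_on_Fd (4 * k + 1) eta (nth (L0 0 0) C i)) /\
  (forall i j : nat, (i < j)%N -> (j < size C)%N ->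
     lines_disjoint eta (nth (L0 0 0) C i) (nth (L0 0 0) C j)).
Proof.
move=> C; split; last split.
- rewrite /C /C0 /C1 /C2 !size_cat !size_map !size_iota /=; lia.
- move=> i _; apply: on_Fd => //.
  by rewrite addn1 /= oddM.
- move=> i j ij jC; apply: (good_disj heta).
  have P := pw hk; move/(pairwiseP (L0 0 0)): P => P.
  have hi : (i < size C)%N by apply: ltn_trans jC.
  exact: (P i j hi jC ij).
Qed.
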